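(* Consider an instance of \textsc{Min-Lin-Eq$(q)$-Full} on the complete graph with $n$ vertices and $m=\binom n2$ edges. Fix an optimal assignment $\mathrm{OPT}$, violating $\mathrm{OPT_{val}}=\varepsilon m$ constraints with $0\le \varepsilon<\frac12$, and call the edges violated by $\mathrm{OPT}$ red. Call a vertex $v$ flippable if the number of red edges incident to $v$ is at least $(n-1)/2-\varepsilon(n-1)$. Then there are at most $\varepsilon\nu n$ flippable vertices, where $\nu=2/(1-2\varepsilon)$.
   Context: \textsc{Min-Lin-Eq$(q)$-Full}: given a complete simple graph $G=(V,E)$, a positive integer $q$, and for each ordered pair $(u,v)$ of distinct vertices an integer $c_{uv}\in\{0,\dots,q-1\}$ with $c_{vu}\equiv -c_{uv}\pmod q$, each edge $uv$ carries the constraint $x_u-x_v\equiv c_{uv}\pmod q$ on assignments $x:V\to\{0,\dots,q-1\}$; the goal is to find an assignment minimizing the number of violated constraints. *)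

(* Defs.v *)
From mathcomp Require Import all_boot all_order all_algebra.
Set Implicit Arguments. Unset Strict Implicit. Unset Printing Implicit Defensive.
Import Order.TTheory GRing.Theory Num.Theory.

Definition antisym_rhs (n q : nat) (c : 'I_n -> 'I_n -> 'I_q) : Prop :=
  forall u v : 'I_n, u != v -> ((c v u)%:Z + (c u v)%:Z = 0 %[mod q])%Z.

Definition violated (n q : nat) (c : 'I_n -> 'I_n -> 'I_q) (x : 'I_n -> 'I_q)
  (u v : 'I_n) : bool :=
  ((x u)%:Z - (x v)%:Z != (c u v)%:Z %[mod q])%Z.

Definition cost (n q : nat) (c : 'I_n -> 'I_n -> 'I_q) (x : 'I_n -> 'I_q) : nat :=
  #|[set p : 'I_n * 'I_n | (p.1 < p.2)%N && violated c x p.1 p.2]|.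

Definition red_deg (n q : nat) (c : 'I_n -> 'I_n -> 'I_q) (x : 'I_n -> 'I_q)
  (v : 'I_n) : nat :=
  #|[set u : 'I_n | (u != v) && violated c x u v]|.

(* Main.v *)
Require Import Defs.
From mathcomp Require Import all_boot all_order all_algebra.
From mathcomp Require Import zify ring lra.
Import Order.TTheory GRing.Theory Num.Theory.
Local Open Scope ring_scope.

Lemma viol_sym n q (c : 'I_n -> 'I_n -> 'I_q) x u v :
  antisym_rhs c -> violated c x u v = violated c x v u.
Proof.
move=> H; have [->//|uv] := eqVneq u v.
have := H u v uv; move/eqP; rewrite /violated !eqz_mod_dvd subr0 => Hm.
congr negb; apply/idP/idP => E.
- have -> : (x v)%:Z - (x u)%:Z - (c v u)%:Z = - ((x u)%:Z - (x v)%:Z - (c u v)%:Z) - ((c v u)%:Z + (c u v)%:Z) by ring.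
  by rewrite rpredB ?rpredN.
- have -> : (x u)%:Z - (x v)%:Z - (c u v)%:Z = - ((x v)%:Z - (x u)%:Z - (c v u)%:Z) - ((c v u)%:Z + (c u v)%:Z) by ring.
  by rewrite rpredB ?rpredN.
Qed.

Lemma sum_red n q (c : 'I_n -> 'I_n -> 'I_q) x :
  antisym_rhs c -> (\sum_v red_deg c x v = 2 * cost c x)%N.
Proof.
move=> H; rewrite /red_deg /cost.
under eq_bigr => v _ do rewrite cardsE -sum1_card big_mkcond /=.
rewrite cardsE -sum1_card big_mkcond /=.
have -> : (\sum_(i in (fun x0 : 'I_n * 'I_n => (x0.1 < x0.2) && violated c x x0.1 x0.2)) 1
   = \sum_(u : 'I_n) \sum_(v : 'I_n) if (u < v)%N && violated c x u v then 1 else 0)%N.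
  rewrite pair_big /= big_mkcond /=; apply: eq_bigr => -[u v] _ //.
rewrite mul2n -addnn.
have E1 : (\sum_(v : 'I_n) \sum_(u : 'I_n) (if u \in (fun x0 : 'I_n => (x0 != v) && violated c x x0 v) then 1 else 0)
   = \sum_(v : 'I_n) \sum_(u : 'I_n) ((if (u < v)%N && violated c x u v then 1 else 0) + (if (v < u)%N && violated c x u v then 1 else 0)))%N.
  apply: eq_bigr => v _; apply: eq_bigr => u _.
  rewrite unfold_in /= neq_ltn; case: (ltngtP u v) => //=; case: violated => //.
rewrite E1; under eq_bigr => v _ do rewrite big_split /=.
rewrite big_split /=; congr (_ + _)%N.
- by rewrite exchange_big.
- apply: eq_bigr => v _; apply: eq_bigr => u _; by rewrite (@viol_sym _ _ c x u v H).
Qed.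
Lemma binm (k : nat) : ('C(k.+1, 2) * 2 = k.+1 * k)%N.
Proof.
rewrite bin2 /= -[RHS](odd_double_half) oddM /=.
by rewrite andNb add0n muln2.
Qed.

Lemma fin (F e N C m : rat) : 2 <= N -> 0 <= e -> e < 1/2 -> 0 < m ->
  e * m = C -> m * 2 = N * (N - 1) ->
  F * ((N - 1) / 2 - e * (N - 1)) <= 2 * C -> 0 <= F ->
  F <= e * (2 / (1 - 2 * e)) * N.
Proof.
move=> N2 e0 e1 m0 <- mE H F0.
have d0 : 0 < 1 - 2 * e by lra.
have -> : e * (2 / (1 - 2 * e)) * N = (e * 2 * N) / (1 - 2 * e).
  by field; rewrite gt_eqF.
rewrite ler_pdivlMr //.
have H2 : F * (1 - 2 * e) * (N - 1) <= e * 2 * N * (N - 1).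
  have -> : e * 2 * N * (N - 1) = 2 * (2 * (e * m)).
    have -> : 2 * (2 * (e * m)) = 2 * e * (m * 2) by ring.
    rewrite mE; ring.
  have -> : F * (1 - 2 * e) * (N - 1) = 2 * (F * ((N - 1) / 2 - e * (N - 1))) by field.
  by rewrite ler_pM2l.
have N1 : 0 < N - 1 by lra.
rewrite -(ler_pM2r N1) (le_trans H2) //; apply: le_refl.
Qed.

Theorem lemma3 (n q : nat) (c : 'I_n -> 'I_n -> 'I_q) (OPT : 'I_n -> 'I_q) :
  (0 < q)%N -> (2 <= n)%N ->
  antisym_rhs c ->
  (forall y : 'I_n -> 'I_q, (cost c OPT <= cost c y)%N) ->
  let m : rat := ('C(n, 2))%:R in
  let eps : rat := (cost c OPT)%:R / m in
  0 <= eps -> eps < 1 / 2 ->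
  let nu : rat := 2 / (1 - 2 * eps) in
  (#|[set v : 'I_n | (n%:R - 1) / 2 - eps * (n%:R - 1) <= (red_deg c OPT v)%:R]|)%:R
    <= eps * nu * n%:R.
Proof.
move=> q0 n2 Hc _ m eps e0 e1; cbv zeta.
have m0 : 0 < m by rewrite /m ltr0n bin_gt0.
set S := [set v | _].
apply: (@fin _ eps n%:R (cost c OPT)%:R m) => //.
- by rewrite ler_nat.
- by rewrite /eps divfK // gt_eqF.
- have [k nk] : exists k, n = k.+1 by case: (n) n2 => // k; exists k.
  rewrite /m nk -natrM binm natrM -addn1 natrD addrK.
  done.
- rewrite -[#|S|]sum1_card natr_sum mulr_suml.
  apply: (@le_trans _ _ (\sum_(i in S) (red_deg c OPT i)%:R)).
    by apply: ler_sum => i; rewrite inE mul1r.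
  rewrite -natr_sum -natrM ler_nat -sum_red //.
  rewrite [X in (_ <= X)%N](bigID (mem S)) /=; exact: leq_addr.
Qed.
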